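(* Let $\mathbb{P}$ and $\mathbb{Q}$ be probability distributions with support $\mathcal{X}$, let $x_1,\dots,x_k$ be i.i.d. from $\mathbb{P}$ and $y_1,\dots,y_k$ i.i.d. from $\mathbb{Q}$ (independent), $k\ge2$, and let $f_{LS}(z)=-(z-1)^2+1$. For a critic $C:\mathcal{X}\to\mathbb{R}$ put $\hat\mu_{C(x)}=\frac1k\sum_{i=1}^kC(x_i)$, $\hat\mu_{C(y)}=\frac1k\sum_{i=1}^kC(y_i)$, $\hat\mu_C=\frac1k\sum_{i=1}^k\frac{C(x_i)+C(y_i)}{2}$, $\hat\sigma_{C(x)}=\frac1{k-1}\sum_{i=1}^k(C(x_i)-\hat\mu_{C(x)})^2$, $\hat\sigma_{C(y)}=\frac1{k-1}\sum_{i=1}^k(C(y_i)-\hat\mu_{C(y)})^2$. Then $$\sup_{C}\ \frac1k\Big(\hat\sigma_{C(x)}+\hat\sigma_{C(y)}-\sum_{i=1}^k\big(C(x_i)-\hat\mu_{C(y)}-1\big)^2-\sum_{j=1}^k\big(\hat\mu_{C(x)}-C(y_j)-1\big)^2\Big)+2,$$ $$\sup_{C}\ \frac2k\Big(\hat\sigma_{C(y)}-\sum_{i=1}^k\big(C(x_i)-\hat\mu_{C(y)}-1\big)^2\Big)+2,$$ $$\sup_{C}\ -\frac1k\Big(\tfrac12\hat\sigma_{C(x)}+\tfrac12\hat\sigma_{C(y)}+\sum_{i=1}^k\big(C(x_i)-\hat\mu_{C}-1\big)^2+\sum_{j=1}^k\big(\hat\mu_{C}-C(y_j)-1\big)^2\Big)+2$$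 are unbiased estimators of $\mathrm{D}^{Ra}_{f_{LS}}(\mathbb{P},\mathbb{Q})$, $\mathrm{D}^{Ralf}_{f_{LS}}(\mathbb{P},\mathbb{Q})$ and $\mathrm{D}^{Rc}_{f_{LS}}(\mathbb{P},\mathbb{Q})$ respectively.
   Context: Suprema range over (measurable) critics $C:\mathcal{X}\to\mathbb{R}$ with the relevant moments finite. With $\mathbb{M}=\frac12\mathbb{P}+\frac12\mathbb{Q}$: $\mathrm{D}^{Ra}_f(\mathbb{P},\mathbb{Q})=\sup_C \mathbb{E}_{x\sim\mathbb{P}}[f(C(x)-\mathbb{E}_{y\sim\mathbb{Q}}C(y))]+\mathbb{E}_{y\sim\mathbb{Q}}[f(\mathbb{E}_{x\sim\mathbb{P}}C(x)-C(y))]$; $\mathrm{D}^{Ralf}_f(\mathbb{P},\mathbb{Q})=\sup_C 2\,\mathbb{E}_{x\sim\mathbb{P}}[f(C(x)-\mathbb{E}_{y\sim\mathbb{Q}}C(y))]$; $\mathrm{D}^{Rc}_f(\mathbb{P},\mathbb{Q})=\sup_C \mathbb{E}_{x\sim\mathbb{P}}[f(C(x)-\mathbb{E}_{m\sim\mathbb{M}}C(m))]+\mathbb{E}_{y\sim\mathbb{Q}}[f(\mathbb{E}_{m\sim\mathbb{M}}C(m)-C(y))]$. *)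

(* Defs.v *)
From HB Require Import structures.
From mathcomp Require Import all_boot all_order all_algebra.
From mathcomp Require Import all_classical all_reals all_analysis.
Set Implicit Arguments. Unset Strict Implicit. Unset Printing Implicit Defensive.
Import Order.TTheory GRing.Theory Num.Theory.
Local Open Scope classical_set_scope.
Local Open Scope ring_scope.

Section Defs.
Variable R : realType.

Definition fLS (z : R) : R := - (z - 1) ^+ 2 + 1.

Definition meanC (dX : measure_display) (Xs : measurableType dX)
  (P : probability Xs R) (C : Xs -> R) : R := fine (\int[P]_x (C x)%:E).

(* the objectives inside the suprema of D^Ra, D^Ralf, D^Rc for f = f_LS *)
Definition obj_Ra dX (Xs : measurableType dX) (P Q : probability Xs R)
  (C : Xs -> R) : \bar R :=
  (\int[P]_x (fLS (C x - meanC Q C))%:E + \int[Q]_y (fLS (meanC P C - C y))%:E)%E.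

Definition obj_Ralf dX (Xs : measurableType dX) (P Q : probability Xs R)
  (C : Xs -> R) : \bar R :=
  (2%:E * \int[P]_x (fLS (C x - meanC Q C))%:E)%E.

(* E_{m ~ M} C(m) with M = P/2 + Q/2 *)
Definition meanM dX (Xs : measurableType dX) (P Q : probability Xs R)
  (C : Xs -> R) : R := (meanC P C + meanC Q C) / 2.

Definition obj_Rc dX (Xs : measurableType dX) (P Q : probability Xs R)
  (C : Xs -> R) : \bar R :=
  (\int[P]_x (fLS (C x - meanM P Q C))%:E
   + \int[Q]_y (fLS (meanM P Q C - C y))%:E)%E.

Definition muhat (k : nat) (s : 'I_k -> R) : R := k%:R^-1 * \sum_(i < k) s i.
Definition sighat (k : nat) (s : 'I_k -> R) : R :=
  (k%:R - 1)^-1 * \sum_(i < k) (s i - muhat s) ^+ 2.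

Definition est_Ra (k : nat) (cx cy : 'I_k -> R) : R :=
  k%:R^-1 * (sighat cx + sighat cy
             - \sum_(i < k) (cx i - muhat cy - 1) ^+ 2
             - \sum_(j < k) (muhat cx - cy j - 1) ^+ 2) + 2.

Definition est_Ralf (k : nat) (cx cy : 'I_k -> R) : R :=
  2 / k%:R * (sighat cy - \sum_(i < k) (cx i - muhat cy - 1) ^+ 2) + 2.

Definition est_Rc (k : nat) (cx cy : 'I_k -> R) : R :=
  let muC := k%:R^-1 * \sum_(i < k) ((cx i + cy i) / 2) in
  - (k%:R^-1 * (2^-1 * sighat cx + 2^-1 * sighat cy
              + \sum_(i < k) (cx i - muC - 1) ^+ 2
              + \sum_(j < k) (muC - cy j - 1) ^+ 2)) + 2.

Definition mutual_indep d (Om : measurableType d) (Pr : probability Om R)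
  (I : finType) dX (Xs : measurableType dX) (Z : I -> Om -> Xs) : Prop :=
  forall A : I -> set Xs, (forall i, measurable (A i)) ->
    Pr (\bigcap_(i in [set: I]) (Z i @^-1` A i))
    = (\prod_(i : I) Pr (Z i @^-1` A i))%E.

End Defs.

Definition sample_family (T U : Type) (k : nat) (X Y : 'I_k -> T -> U)
  : ('I_k + 'I_k)%type -> T -> U :=
  fun s => match s with inl i => X i | inr j => Y j end.

(* Main.v *)
Require Import Defs.
From HB Require Import structures.
From mathcomp Require Import all_boot all_order all_algebra.
From mathcomp Require Import all_classical all_reals all_analysis.
From mathcomp Require Import ring lra measurable_realfun.
Import Order.TTheory GRing.Theory Num.Theory.
Local Open Scope classical_set_scope.
Local Open Scope ring_scope.
Section Ex.
Context (R : realType) (d : measure_display) (Om : measurableType d) (Pr : probability Om R).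

Definition Int (f : Om -> R) := Pr.-integrable setT (EFin \o f).
Definition Ex (f : Om -> R) : R := fine (\int[Pr]_w (f w)%:E).

Lemma intE {f} : Int f -> (\int[Pr]_w (f w)%:E = (Ex f)%:E)%E.
Proof. by move=> h; rewrite /Ex fineK //; exact: integrable_fin_num h. Qed.

Lemma Int_add f g : Int f -> Int g -> Int (fun w => f w + g w).
Proof. by move=> hf hg; have := integrableD measurableT hf hg. Qed.

Lemma Ex_add f g : Int f -> Int g -> Ex (fun w => f w + g w) = Ex f + Ex g.
Proof.
move=> hf hg; rewrite /Ex.
rewrite (eq_integral (fun w => (f w)%:E + (g w)%:E)%E); last by move=> w _; rewrite EFinD.
by rewrite integralD // (intE hf) (intE hg).
Qed.

Lemma Int_scale c f : Int f -> Int (fun w => c * f w).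
Proof. by move=> hf; have := integrableZl measurableT c hf. Qed.

Lemma Ex_scale c f : Int f -> Ex (fun w => c * f w) = c * Ex f.
Proof.
move=> hf; rewrite /Ex.
rewrite (eq_integral (fun w => c%:E * (f w)%:E)%E); last by move=> w _; rewrite EFinM.
by rewrite integralZl // (intE hf).
Qed.

Lemma Int_cst c : Int (fun _ => c).
Proof. exact: finite_measure_integrable_cst. Qed.

Lemma Ex_cst c : Ex (fun _ => c) = c.
Proof. rewrite /Ex (integral_cst Pr measurableT c%:E). transitivity (fine (c%:E * 1%E)); last by rewrite mule1. by congr (fine (_ * _)); exact: probability_setT. Qed.

Lemma Int_sum (I : eqType) (s : seq I) (F : I -> Om -> R) :
  (forall i, Int (F i)) -> Int (fun w => \sum_(i <- s) F i w).
Proof.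
move=> h; elim: s => [|i s IH].
  by under [fun w => _]funext do rewrite big_nil; exact: Int_cst.
by under [fun w => _]funext do rewrite big_cons; exact: Int_add.
Qed.

Lemma Ex_sum (I : eqType) (s : seq I) (F : I -> Om -> R) :
  (forall i, Int (F i)) -> Ex (fun w => \sum_(i <- s) F i w) = \sum_(i <- s) Ex (F i).
Proof.
move=> h; elim: s => [|i s IH].
  by under [fun w => _]funext do rewrite big_nil; rewrite Ex_cst big_nil.
under [fun w => _]funext do rewrite big_cons.
by rewrite Ex_add // ?IH ?big_cons //; exact: Int_sum.
Qed.


Lemma Int_mul (f g : Om -> R) : measurable_fun setT f -> measurable_fun setT g ->
  Int (fun w => f w ^+ 2) -> Int (fun w => g w ^+ 2) -> Int (fun w => f w * g w).
Proof.
move=> mf mg hf hg.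
apply: (@le_integrable _ _ _ Pr setT measurableT _ (EFin \o (fun w => f w ^+ 2 + g w ^+ 2))); last exact: Int_add.
  by apply/measurable_EFinP; exact: measurable_funM.
move=> w _ /=; rewrite lee_fin normrM.
have ha := normr_ge0 (f w); have hb := normr_ge0 (g w).
have e1 : `|f w| ^+ 2 = f w ^+ 2 by rewrite real_normK // num_real.
have e2 : `|g w| ^+ 2 = g w ^+ 2 by rewrite real_normK // num_real.
rewrite [X in _ <= X]ger0_norm; last by rewrite addr_ge0 // sqr_ge0.
rewrite -e1 -e2; nra.
Qed.

Lemma Int_of_sq (f : Om -> R) : measurable_fun setT f -> Int (fun w => f w ^+ 2) -> Int f.
Proof.
move=> mf hf.
apply: (@le_integrable _ _ _ Pr setT measurableT _ (EFin \o (fun w => 1 + f w ^+ 2))); last by apply: Int_add => //; exact: Int_cst.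
  by apply/measurable_EFinP.
move=> w _ /=; rewrite lee_fin.
have ha := normr_ge0 (f w).
have e1 : `|f w| ^+ 2 = f w ^+ 2 by rewrite real_normK // num_real.
rewrite [X in _ <= X]ger0_norm; last by rewrite addr_ge0 // sqr_ge0.
rewrite -e1; nra.
Qed.
End Ex.
Arguments Int {R d Om} Pr f.
Arguments Ex {R d Om} Pr f.
Arguments intE {R d Om Pr f}.
Arguments Int_add {R d Om Pr f g}.
Arguments Ex_add {R d Om Pr f g}.
Arguments Int_scale {R d Om Pr} c {f}.
Arguments Ex_scale {R d Om Pr} c {f}.
Arguments Int_cst {R d Om Pr} c.
Arguments Ex_cst {R d Om Pr} c.
Arguments Int_sum {R d Om Pr I} s {F}.
Arguments Ex_sum {R d Om Pr I} s {F}.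
Arguments Int_mul {R d Om Pr f g}.
Arguments Int_of_sq {R d Om Pr f}.
Section Law.
Context (R : realType) (d dX : measure_display) (Om : measurableType d) (Xs : measurableType dX)
  (Pr : probability Om R) (L : probability Xs R) (Z : Om -> Xs).
Hypothesis mZ : measurable_fun setT Z.
Hypothesis hL : forall A, measurable A -> Pr (Z @^-1` A) = L A.

Lemma law_int (g : Xs -> R) : measurable_fun setT g ->
  L.-integrable setT (EFin \o g) ->
  Int Pr (fun w => g (Z w)) /\ Ex Pr (fun w => g (Z w)) = fine (\int[L]_x (g x)%:E).
Proof.
move=> mg ig.
have eqm : forall A, measurable A -> A `<=` setT -> pushforward Pr Z A = L A.
  by move=> A mA _; rewrite /pushforward hL.
have I1 : Int Pr (fun w => g (Z w)).
  apply/integrableP; split.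
    by apply/measurable_EFinP; exact: measurableT_comp.
  move/integrableP: ig => [_ ig].
  have h : (\int[Pr]_x `|(g (Z x))%:E| = \int[L]_y `|(g y)%:E|)%E.
    rewrite [RHS](eq_measure_integral (pushforward Pr Z)); last first.
      by move=> A mA _; symmetry; exact: hL.
    rewrite ge0_integral_pushforward //.
    - by apply: measurableT_comp => //; apply/measurable_EFinP.
  by rewrite /= h.
split => //.
rewrite /Ex.
have := integral_pushforward mZ (mu := Pr) (D := setT) (f := EFin \o g).
rewrite preimage_setT => <- //.
- by rewrite (eq_measure_integral L).
- exact/measurable_EFinP.
Qed.
End Law.
Section Pair.
Context (R : realType) (d dX : measure_display) (Om : measurableType d) (Xs : measurableType dX)
  (Pr : probability Om R) (P1 P2 : probability Xs R) (U V : Om -> Xs).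
Hypothesis mU : measurable_fun setT U.
Hypothesis mV : measurable_fun setT V.
Hypothesis hj : forall A B, measurable A -> measurable B ->
  Pr (U @^-1` A `&` V @^-1` B) = (P1 A * P2 B)%E.

Let phi := fun w => (U w, V w).
Let mphi : measurable_fun setT phi := measurable_fun_pair mU mV.
Let mu' : {measure set (Xs * Xs) -> \bar R}.
Proof. refine (pushforward Pr phi : {measure set (Xs * Xs) -> \bar R}); exact: mphi. Defined.

Let mu'E A : mu' A = Pr (phi @^-1` A). Proof. by []. Qed.

Let eq_prod X : measurable X -> (P1 \x P2)%E X = mu' X.
Proof.
apply: product_measure_unique => A B mA mB.
rewrite mu'E -hj //.
Qed.

Variable C : Xs -> R.
Hypothesis mC : measurable_fun setT C.
Hypothesis i1 : P1.-integrable setT (EFin \o C).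
Hypothesis i2 : P2.-integrable setT (EFin \o C).
Hypothesis iUV : Int Pr (fun w => C (U w) * C (V w)).

Lemma pair_prod : Ex Pr (fun w => C (U w) * C (V w)) =
  fine (\int[P1]_x (C x)%:E) * fine (\int[P2]_x (C x)%:E).
Proof.
pose h := fun p : Xs * Xs => (C p.1 * C p.2)%:E.
have mh : measurable_fun setT h.
  apply/measurable_EFinP; apply: measurable_funM.
  - exact: measurableT_comp mC measurable_fst.
  - exact: measurableT_comp mC measurable_snd.
have e1 : (\int[Pr]_w (C (U w) * C (V w))%:E = \int[mu']_p h p)%E.
  rewrite integral_pushforward //.
have ipush : mu'.-integrable setT h.
  by apply: integrable_pushforward => //; rewrite preimage_setT.
have eqi : forall f, (\int[mu']_p f p = \int[(P1 \x P2)%E]_p f p)%E.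
  by move=> f; apply: eq_measure_integral => A mA _; symmetry; exact: eq_prod.
have iprod : (P1 \x P2)%E.-integrable setT h.
  move/integrableP: ipush => [_ ip]; apply/integrableP; split => //.
  by rewrite -eqi.
have b_fin := integrable_fin_num measurableT i2.
have a_fin := integrable_fin_num measurableT i1.
rewrite /Ex e1 eqi -(integral12_prod_meas1 iprod).
rewrite /fubini_F /h /=.
under eq_integral => x _.
  rewrite (eq_integral (fun y => (C x)%:E * (C y)%:E)%E); last by move=> y _; rewrite EFinM.
  rewrite integralZl // -(fineK b_fin) -EFinM.
  over.
rewrite /=.
under eq_integral => x _ do rewrite EFinM.
rewrite integralZr // -(fineK a_fin) -EFinM /=.
by [].
Qed.
End Pair.
Arguments law_int {R d dX Om Xs Pr L Z} mZ hL {g}.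
Arguments pair_prod {R d dX Om Xs Pr P1 P2 U V} mU mV hj {C} mC i1 i2 iUV.
Section Alg.
Context (R : realType) (k : nat).
Hypothesis hk : (2 <= k)%N.
Let K : R := k%:R.
Let K0 : K != 0. Proof. by rewrite /K pnatr_eq0 -lt0n (leq_trans _ hk). Qed.
Let K1 : K - 1 != 0.
Proof. rewrite /K subr_eq0 (_ : 1 = 1%:R) // eqr_nat; apply/eqP => e; by move: hk; rewrite e. Qed.

Definition S (s : 'I_k -> R) := \sum_(i < k) s i.
Definition Q (s : 'I_k -> R) := \sum_(i < k) s i ^+ 2.

Lemma sumsq (F : 'I_k -> R) (s : 'I_k -> R) al be :
  (forall i, F i = (al * s i + be) ^+ 2) ->
  \sum_(i < k) F i = al ^+ 2 * Q s + 2 * al * be * S s + K * be ^+ 2.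
Proof.
move=> hF.
rewrite (eq_bigr (fun i => al ^+ 2 * s i ^+ 2 + (2 * al * be * s i + be ^+ 2))); last first.
  by move=> i _; rewrite hF; ring.
rewrite big_split big_split /= -!mulr_sumr sumr_const card_ord /Q /S /K.
by rewrite -mulr_natr addrA; ring.
Qed.

Lemma est_Ra_poly (cx cy : 'I_k -> R) : est_Ra cx cy =
  K^-1 * ((K - 1)^-1 - 1) * Q cx + K^-1 * ((K - 1)^-1 - 1) * Q cy
  - K^-1 * (K^-1 * (K - 1)^-1 + K^-1) * S cx ^+ 2
  - K^-1 * (K^-1 * (K - 1)^-1 + K^-1) * S cy ^+ 2
  + 4 * K^-1 * K^-1 * (S cx * S cy) + 4 * K^-1 * S cx - 4 * K^-1 * S cy.
Proof.
rewrite /est_Ra /sighat.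
rewrite (sumsq (fun i => (cx i - muhat cx) ^+ 2) cx 1 (- muhat cx)); last by move=> i; ring.
rewrite (sumsq (fun i => (cy i - muhat cy) ^+ 2) cy 1 (- muhat cy)); last by move=> i; ring.
rewrite (sumsq (fun i => (cx i - muhat cy - 1) ^+ 2) cx 1 (- muhat cy - 1)); last by move=> i; ring.
rewrite (sumsq (fun i => (muhat cx - cy i - 1) ^+ 2) cy (-1) (muhat cx - 1)); last by move=> i; ring.
rewrite /muhat -/(S cx) -/(S cy) -/K.
by field; rewrite K0 K1.
Qed.

Lemma est_Ralf_poly (cx cy : 'I_k -> R) : est_Ralf cx cy =
  - (2 * K^-1) * Q cx + 2 * K^-1 * (K - 1)^-1 * Q cy
  - 2 * K^-1 * K^-1 * ((K - 1)^-1 + 1) * S cy ^+ 2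
  + 4 * K^-1 * K^-1 * (S cx * S cy) + 4 * K^-1 * S cx - 4 * K^-1 * S cy.
Proof.
rewrite /est_Ralf /sighat.
rewrite (sumsq (fun i => (cy i - muhat cy) ^+ 2) cy 1 (- muhat cy)); last by move=> i; ring.
rewrite (sumsq (fun i => (cx i - muhat cy - 1) ^+ 2) cx 1 (- muhat cy - 1)); last by move=> i; ring.
rewrite /muhat -/(S cx) -/(S cy) -/K.
by field; rewrite K0 K1.
Qed.

Lemma est_Rc_poly (cx cy : 'I_k -> R) : est_Rc cx cy =
  - (K^-1 * (2^-1 * (K - 1)^-1 + 1)) * Q cx - (K^-1 * (2^-1 * (K - 1)^-1 + 1)) * Q cy
  + K^-1 * (2^-1 * K^-1 * (K - 1)^-1 + 2^-1 * K^-1) * S cx ^+ 2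
  + K^-1 * (2^-1 * K^-1 * (K - 1)^-1 + 2^-1 * K^-1) * S cy ^+ 2
  + K^-1 * K^-1 * (S cx * S cy) + 2 * K^-1 * S cx - 2 * K^-1 * S cy.
Proof.
rewrite /est_Rc /sighat /=.
set m := k%:R^-1 * \sum_(i < k) ((cx i + cy i) / 2).
have hm : m = (S cx + S cy) / (2 * K).
  rewrite /m -/K /S -big_split /= -mulr_suml; field; rewrite K0 //.
rewrite (sumsq (fun i => (cx i - muhat cx) ^+ 2) cx 1 (- muhat cx)); last by move=> i; ring.
rewrite (sumsq (fun i => (cy i - muhat cy) ^+ 2) cy 1 (- muhat cy)); last by move=> i; ring.
rewrite (sumsq (fun i => (cx i - m - 1) ^+ 2) cx 1 (- m - 1)); last by move=> i; ring.
rewrite (sumsq (fun i => (m - cy i - 1) ^+ 2) cy (-1) (m - 1)); last by move=> i; ring.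
rewrite hm /muhat -/(S cx) -/(S cy) -/K.
by field; rewrite K0 K1.
Qed.
End Alg.
Arguments S {R k} s.
Arguments Q {R k} s.
Arguments est_Ra_poly {R k} hk cx cy.
Arguments est_Ralf_poly {R k} hk cx cy.
Arguments est_Rc_poly {R k} hk cx cy.
Section Mom.
Context (R : realType) (d : measure_display) (Om : measurableType d) (Pr : probability Om R) (k : nat).
Variables (x y : 'I_k -> Om -> R) (a b mx my : R).
Hypothesis Ix : forall i, Int Pr (x i).
Hypothesis Iy : forall i, Int Pr (y i).
Hypothesis Ixx : forall i j, Int Pr (fun w => x i w * x j w).
Hypothesis Iyy : forall i j, Int Pr (fun w => y i w * y j w).
Hypothesis Ixy : forall i j, Int Pr (fun w => x i w * y j w).
Hypothesis Ex_x : forall i, Ex Pr (x i) = a.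
Hypothesis Ex_y : forall i, Ex Pr (y i) = b.
Hypothesis Ex_xx : forall i j, Ex Pr (fun w => x i w * x j w) = if i == j then mx else a ^+ 2.
Hypothesis Ex_yy : forall i j, Ex Pr (fun w => y i w * y j w) = if i == j then my else b ^+ 2.
Hypothesis Ex_xy : forall i j, Ex Pr (fun w => x i w * y j w) = a * b.

Let K : R := k%:R.

Lemma sum_delta (i : 'I_k) (v u : R) :
  \sum_(j < k) (if i == j then v else u) = v + (K - 1) * u.
Proof.
rewrite (bigD1 i) //= eqxx; congr (_ + _).
rewrite (eq_bigr (fun _ => u)); last by move=> j /negbTE; rewrite eq_sym => ->.
rewrite sumr_const cardC1 card_ord /K.
rewrite -[u *+ _]mulr_natl; congr (_ * _).
have : (0 < k)%N by case: k i => // -[].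
case: k {i} => // n _.
by rewrite -natr1 addrK.
Qed.

Let SX w := S (fun i => x i w).
Let SY w := S (fun i => y i w).
Let QX w := Q (fun i => x i w).
Let QY w := Q (fun i => y i w).

Let I_S (z : 'I_k -> Om -> R) : (forall i, Int Pr (z i)) -> Int Pr (fun w => S (fun i => z i w)).
Proof. by move=> h; apply: Int_sum. Qed.
Let Ex_S (z : 'I_k -> Om -> R) c : (forall i, Int Pr (z i)) -> (forall i, Ex Pr (z i) = c) ->
  Ex Pr (fun w => S (fun i => z i w)) = K * c.
Proof.
move=> h e; rewrite /S (Ex_sum _ h) (eq_bigr (fun _ => c)); last by move=> i _; exact: e.
by rewrite sumr_const card_ord mulr_natl.
Qed.

Let ISX : Int Pr SX. Proof. exact: I_S. Qed.
Let ISY : Int Pr SY. Proof. exact: I_S. Qed.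
Let IQX : Int Pr QX. Proof. by apply: (I_S (fun i w => x i w ^+ 2)) => i; exact: Ixx. Qed.
Let IQY : Int Pr QY. Proof. by apply: (I_S (fun i w => y i w ^+ 2)) => i; exact: Iyy. Qed.
Let ESX : Ex Pr SX = K * a. Proof. exact: Ex_S. Qed.
Let ESY : Ex Pr SY = K * b. Proof. exact: Ex_S. Qed.
Let EQX : Ex Pr QX = K * mx.
Proof. apply: (Ex_S (fun i w => x i w ^+ 2)) => i; first exact: Ixx. by rewrite Ex_xx eqxx. Qed.
Let EQY : Ex Pr QY = K * my.
Proof. apply: (Ex_S (fun i w => y i w ^+ 2)) => i; first exact: Iyy. by rewrite Ex_yy eqxx. Qed.

Let sqS (s : 'I_k -> R) : S s ^+ 2 = \sum_(i < k) \sum_(j < k) s i * s j.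
Proof. by rewrite expr2 /S mulr_suml; apply: eq_bigr => i _; rewrite mulr_sumr. Qed.
Let mulS (s t : 'I_k -> R) : S s * S t = \sum_(i < k) \sum_(j < k) s i * t j.
Proof. by rewrite /S mulr_suml; apply: eq_bigr => i _; rewrite mulr_sumr. Qed.

Let ISX2 : Int Pr (fun w => SX w ^+ 2).
Proof.
rewrite /SX; under [fun w => _]funext do rewrite sqS.
apply: Int_sum => i; apply: Int_sum => j; exact: Ixx.
Qed.
Let ISY2 : Int Pr (fun w => SY w ^+ 2).
Proof.
rewrite /SY; under [fun w => _]funext do rewrite sqS.
apply: Int_sum => i; apply: Int_sum => j; exact: Iyy.
Qed.
Let ISXY : Int Pr (fun w => SX w * SY w).
Proof.
rewrite /SX /SY; under [fun w => _]funext do rewrite mulS.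
apply: Int_sum => i; apply: Int_sum => j; exact: Ixy.
Qed.
Let ESX2 : Ex Pr (fun w => SX w ^+ 2) = K * mx + K * (K - 1) * a ^+ 2.
Proof.
rewrite /SX; under [fun w => _]funext do rewrite sqS.
rewrite Ex_sum; last by move=> i; apply: Int_sum => j; exact: Ixx.
under eq_bigr => i _.
  rewrite Ex_sum; last by move=> j; exact: Ixx.
  under eq_bigr => j _ do rewrite Ex_xx.
  rewrite sum_delta.
  over.
by rewrite sumr_const card_ord -mulr_natl -/K; ring.
Qed.
Let ESY2 : Ex Pr (fun w => SY w ^+ 2) = K * my + K * (K - 1) * b ^+ 2.
Proof.
rewrite /SY; under [fun w => _]funext do rewrite sqS.
rewrite Ex_sum; last by move=> i; apply: Int_sum => j; exact: Iyy.
under eq_bigr => i _.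
  rewrite Ex_sum; last by move=> j; exact: Iyy.
  under eq_bigr => j _ do rewrite Ex_yy.
  rewrite sum_delta.
  over.
by rewrite sumr_const card_ord -mulr_natl -/K; ring.
Qed.
Let ESXY : Ex Pr (fun w => SX w * SY w) = K * K * (a * b).
Proof.
rewrite /SX /SY; under [fun w => _]funext do rewrite mulS.
rewrite Ex_sum; last by move=> i; apply: Int_sum => j; exact: Ixy.
under eq_bigr => i _.
  rewrite Ex_sum; last by move=> j; exact: Ixy.
  under eq_bigr => j _ do rewrite Ex_xy.
  rewrite sumr_const card_ord -mulr_natl.
  over.
by rewrite sumr_const card_ord -[_ *+ k]mulr_natl -/K mulrA.
Qed.

Definition comb (c1 c2 c3 c4 c5 c6 c7 : R) (w : Om) : R :=
  c1 * QX w + c2 * QY w + c3 * SX w ^+ 2 + c4 * SY w ^+ 2 + c5 * (SX w * SY w)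
  + c6 * SX w + c7 * SY w.

Lemma Int_comb c1 c2 c3 c4 c5 c6 c7 : Int Pr (comb c1 c2 c3 c4 c5 c6 c7).
Proof.
by rewrite /comb; repeat apply: Int_add; apply: Int_scale.
Qed.

Lemma Ex_comb c1 c2 c3 c4 c5 c6 c7 : Ex Pr (comb c1 c2 c3 c4 c5 c6 c7) =
  c1 * (K * mx) + c2 * (K * my) + c3 * (K * mx + K * (K - 1) * a ^+ 2)
  + c4 * (K * my + K * (K - 1) * b ^+ 2) + c5 * (K * K * (a * b))
  + c6 * (K * a) + c7 * (K * b).
Proof.
rewrite /comb.
rewrite !Ex_add; try by repeat apply: Int_add; apply: Int_scale.
by rewrite !Ex_scale // EQX EQY ESX2 ESY2 ESXY ESX ESY.
Qed.

End Mom.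
Arguments comb {R d Om k} x y c1 c2 c3 c4 c5 c6 c7 w.
Arguments Ex_comb {R d Om Pr k x y a b mx my} Ix Iy Ixx Iyy Ixy Ex_x Ex_y Ex_xx Ex_yy Ex_xy c1 c2 c3 c4 c5 c6 c7.
Arguments Int_comb {R d Om Pr k x y} Ix Iy Ixx Iyy Ixy c1 c2 c3 c4 c5 c6 c7.

Lemma indep_pair (R : realType) (d dX : measure_display) (Om : measurableType d)
  (Xs : measurableType dX) (Pr : probability Om R)
  (I : finType) (Z : I -> Om -> Xs) (L : I -> probability Xs R) :
  (forall i A, measurable A -> Pr (Z i @^-1` A) = L i A) -> mutual_indep Pr Z ->
  forall s t, s != t -> forall A B, measurable A -> measurable B ->
  Pr (Z s @^-1` A `&` Z t @^-1` B) = (L s A * L t B)%E.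
Proof.
move=> hL hI s t st A B mA mB.
pose F i := if i == s then A else if i == t then B else setT.
have mF i : measurable (F i) by rewrite /F; case: ifP => _ //; case: ifP.
have := hI F mF.
have -> : \bigcap_(i in [set: I]) Z i @^-1` F i = Z s @^-1` A `&` Z t @^-1` B.
  apply/seteqP; split => w.
  - move=> h; split.
    + by have := h s Logic.I; rewrite /F eqxx.
    + by have := h t Logic.I; rewrite /F eq_sym (negbTE st) eqxx.
  - move=> [hA hB] i _; rewrite /F; case: ifP => [/eqP->|_] //; case: ifP => [/eqP->|_] //.
move=> ->.
rewrite (bigD1 s) //= (bigD1 t) /=; last by rewrite eq_sym.
rewrite big1 ?mule1.
  by rewrite /F eqxx eq_sym (negbTE st) eqxx !hL.
move=> i /andP [si ti]; rewrite /F (negbTE si) (negbTE ti) preimage_setT.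
exact: probability_setT.
Qed.

Lemma Ex_quad (R : realType) (d : measure_display) (Om : measurableType d)
  (Pr : probability Om R) (f g : Om -> R) c2 c1 c0 :
  Int Pr f -> Int Pr (fun w => f w ^+ 2) ->
  (forall w, g w = c2 * f w ^+ 2 + c1 * f w + c0) ->
  (\int[Pr]_w (g w)%:E = (c2 * Ex Pr (fun w => f w ^+ 2) + c1 * Ex Pr f + c0)%:E)%E.
Proof.
move=> h1 h2 hg.
have -> : g = (fun w => c2 * f w ^+ 2 + c1 * f w + c0) by apply/funext.
rewrite intE; last by repeat apply: Int_add; try apply: Int_scale => //; apply: Int_cst.
rewrite Ex_add; [|by apply: Int_add; apply: Int_scale|exact: Int_cst].
rewrite Ex_add; [|by apply: Int_scale|by apply: Int_scale].
by rewrite !Ex_scale // Ex_cst.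
Qed.

Theorem corollary4p2 (R : realType) (d dX : measure_display)
  (Om : measurableType d) (Xs : measurableType dX)
  (Pr : probability Om R) (P Q : probability Xs R)
  (k : nat) (hk : (2 <= k)%N) (X Y : 'I_k -> Om -> Xs) :
  (forall i, measurable_fun setT (X i)) ->
  (forall j, measurable_fun setT (Y j)) ->
  (forall i A, measurable A -> Pr (X i @^-1` A) = P A) ->
  (forall j A, measurable A -> Pr (Y j @^-1` A) = Q A) ->
  mutual_indep Pr (sample_family X Y) ->
  forall C : Xs -> R, measurable_fun setT C ->
  P.-integrable setT (fun x => (C x ^+ 2)%:E) ->
  Q.-integrable setT (fun x => (C x ^+ 2)%:E) ->
  [/\ (\int[Pr]_w (est_Ra (fun i => C (X i w)) (fun j => C (Y j w)))%:E
        = obj_Ra P Q C)%E,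
      (\int[Pr]_w (est_Ralf (fun i => C (X i w)) (fun j => C (Y j w)))%:E
        = obj_Ralf P Q C)%E &
      (\int[Pr]_w (est_Rc (fun i => C (X i w)) (fun j => C (Y j w)))%:E
        = obj_Rc P Q C)%E].
Proof.
move=> mX mY lX lY hI C mC iP2 iQ2.
pose Z := sample_family X Y.
pose L (s : 'I_k + 'I_k) := match s with inl _ => P | inr _ => Q end.
have mZ s : measurable_fun setT (Z s) by case: s.
have lZ s A : measurable A -> Pr (Z s @^-1` A) = L s A by case: s => i /=; [exact: lX|exact: lY].
have pZ := @indep_pair _ _ _ _ _ Pr _ Z L lZ hI.
have iL2 s : (L s).-integrable setT (EFin \o (fun x => C x ^+ 2)) by case: s.
have iL1 s : (L s).-integrable setT (EFin \o C) by exact: (Int_of_sq mC (iL2 s)).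
have mC2 : measurable_fun setT (fun x => C x ^+ 2) by exact: measurable_funX.
pose aL s := fine (\int[L s]_x (C x)%:E).
pose mL s := fine (\int[L s]_x (C x ^+ 2)%:E).
have I1 s : Int Pr (fun w => C (Z s w)) by case: (law_int (mZ s) (lZ s) mC (iL1 s)).
have E1 s : Ex Pr (fun w => C (Z s w)) = aL s by case: (law_int (mZ s) (lZ s) mC (iL1 s)).
have I2 s : Int Pr (fun w => C (Z s w) ^+ 2)
  by case: (law_int (mZ s) (lZ s) mC2 (iL2 s)).
have E2 s : Ex Pr (fun w => C (Z s w) ^+ 2) = mL s
  by case: (law_int (mZ s) (lZ s) mC2 (iL2 s)).
have I12 s t : Int Pr (fun w => C (Z s w) * C (Z t w)).
  by apply: Int_mul => //; apply: measurableT_comp.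
have E12 s t : Ex Pr (fun w => C (Z s w) * C (Z t w)) = if s == t then mL s else aL s * aL t.
  case: eqP => [<-|/eqP st].
    by rewrite -E2; congr (Ex Pr _); apply/funext => w; rewrite expr2.
  exact: (pair_prod (mZ s) (mZ t) (pZ s t st) mC (iL1 s) (iL1 t) (I12 s t)).
pose a := fine (\int[P]_x (C x)%:E).
pose b := fine (\int[Q]_x (C x)%:E).
pose mx := fine (\int[P]_x (C x ^+ 2)%:E).
pose my := fine (\int[Q]_x (C x ^+ 2)%:E).
pose x := fun i w => C (X i w).
pose y := fun j w => C (Y j w).
have Ix i : Int Pr (x i) := I1 (inl i).
have Iy j : Int Pr (y j) := I1 (inr j).
have Ixx i j : Int Pr (fun w => x i w * x j w) := I12 (inl i) (inl j).
have Iyy i j : Int Pr (fun w => y i w * y j w) := I12 (inr i) (inr j).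
have Ixy i j : Int Pr (fun w => x i w * y j w) := I12 (inl i) (inr j).
have Ex_x i : Ex Pr (x i) = a := E1 (inl i).
have Ex_y j : Ex Pr (y j) = b := E1 (inr j).
have Ex_xx i j : Ex Pr (fun w => x i w * x j w) = if i == j then mx else a ^+ 2.
  by have := E12 (inl i) (inl j); rewrite /= => ->; rewrite expr2.
have Ex_yy i j : Ex Pr (fun w => y i w * y j w) = if i == j then my else b ^+ 2.
  by have := E12 (inr i) (inr j); rewrite /= => ->; rewrite expr2.
have Ex_xy i j : Ex Pr (fun w => x i w * y j w) = a * b.
  by have := E12 (inl i) (inr j).
pose K : R := k%:R.
have K0 : K != 0 by rewrite /K pnatr_eq0 -lt0n (leq_trans _ hk).
have K1 : K - 1 != 0.
  rewrite /K subr_eq0 (_ : 1 = 1%:R) // eqr_nat; apply/eqP => e; by move: hk; rewrite e.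
have ECB := Ex_comb Ix Iy Ixx Iyy Ixy Ex_x Ex_y Ex_xx Ex_yy Ex_xy.
have ICB := Int_comb Ix Iy Ixx Iyy Ixy.
have iP1 : Int P C := Int_of_sq mC iP2.
have iQ1 : Int Q C := Int_of_sq mC iQ2.
have iP2' : Int P (fun x => C x ^+ 2) := iP2.
have iQ2' : Int Q (fun x => C x ^+ 2) := iQ2.
split.
- rewrite (eq_integral (fun w => (comb x y (K^-1 * ((K - 1)^-1 - 1)) (K^-1 * ((K - 1)^-1 - 1))
      (- (K^-1 * (K^-1 * (K - 1)^-1 + K^-1))) (- (K^-1 * (K^-1 * (K - 1)^-1 + K^-1)))
      (4 * K^-1 * K^-1) (4 * K^-1) (- (4 * K^-1)) w)%:E)); last first.
    by move=> w _; rewrite (est_Ra_poly hk) /comb -/K; congr EFin; ring.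
  rewrite intE // ECB /obj_Ra.
  rewrite (Ex_quad _ _ _ _ C _ (-1) (2 * (meanC Q C + 1)) (1 - (meanC Q C + 1) ^+ 2) iP1 iP2'); last first.
    by move=> w; rewrite /fLS; ring.
  rewrite (Ex_quad _ _ _ _ C _ (-1) (2 * (meanC P C - 1)) (1 - (meanC P C - 1) ^+ 2) iQ1 iQ2'); last first.
    by move=> w; rewrite /fLS; ring.
  rewrite -EFinD; congr EFin.
  rewrite /meanC -/a -/b -/K; rewrite -/mx -/my -/a -/b.
  rewrite (_ : Ex P C = a) // (_ : Ex Q C = b) // (_ : Ex P (fun w => C w ^+ 2) = mx) // (_ : Ex Q (fun w => C w ^+ 2) = my) //.
  by field; rewrite K0 K1.
- rewrite (eq_integral (fun w => (comb x y (- (2 * K^-1)) (2 * K^-1 * (K - 1)^-1) 0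
      (- (2 * K^-1 * K^-1 * ((K - 1)^-1 + 1)))
      (4 * K^-1 * K^-1) (4 * K^-1) (- (4 * K^-1)) w)%:E)); last first.
    by move=> w _; rewrite (est_Ralf_poly hk) /comb -/K; congr EFin; ring.
  rewrite intE // ECB /obj_Ralf.
  rewrite (Ex_quad _ _ _ _ C _ (-1) (2 * (meanC Q C + 1)) (1 - (meanC Q C + 1) ^+ 2) iP1 iP2'); last first.
    by move=> w; rewrite /fLS; ring.
  rewrite -EFinM; congr EFin.
  rewrite /meanC -/a -/b -/K; rewrite -/mx -/my -/a -/b.
  rewrite (_ : Ex P C = a) // (_ : Ex P (fun w => C w ^+ 2) = mx) //.
  by field; rewrite K0 K1.
- rewrite (eq_integral (fun w => (comb x y
      (- (K^-1 * (2^-1 * (K - 1)^-1 + 1))) (- (K^-1 * (2^-1 * (K - 1)^-1 + 1)))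
      (K^-1 * (2^-1 * K^-1 * (K - 1)^-1 + 2^-1 * K^-1))
      (K^-1 * (2^-1 * K^-1 * (K - 1)^-1 + 2^-1 * K^-1))
      (K^-1 * K^-1) (2 * K^-1) (- (2 * K^-1)) w)%:E)); last first.
    by move=> w _; rewrite (est_Rc_poly hk) /comb -/K; congr EFin; ring.
  rewrite intE // ECB /obj_Rc.
  rewrite (Ex_quad _ _ _ _ C _ (-1) (2 * (meanM P Q C + 1)) (1 - (meanM P Q C + 1) ^+ 2) iP1 iP2'); last first.
    by move=> w; rewrite /fLS; ring.
  rewrite (Ex_quad _ _ _ _ C _ (-1) (2 * (meanM P Q C - 1)) (1 - (meanM P Q C - 1) ^+ 2) iQ1 iQ2'); last first.
    by move=> w; rewrite /fLS; ring.
  rewrite -EFinD; congr EFin.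
  rewrite /meanM /meanC -/a -/b -/K; rewrite -/mx -/my -/a -/b.
  rewrite (_ : Ex P C = a) // (_ : Ex Q C = b) // (_ : Ex P (fun w => C w ^+ 2) = mx) // (_ : Ex Q (fun w => C w ^+ 2) = my) //.
  by field; rewrite K0 K1.
Qed.
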